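(* Assume the following setting. $S$ is a finite semigroup with anti-involution $*$, $R$ a commutative ring with $1$, $\alpha$ a twisting from $S$ into $R$ with $\alpha(x,y)=\alpha(y^*,x^* )$; for each $\mathcal D$-class $D$ there is an idempotent $1_D\in D$ with $1_D^*=1_D$; $L_D$ is the $\mathcal L$-class of $1_D$, $L_D^*=\{x^*\mid x\in L_D\}$, $G_D=L_D\cap L_D^*$; for each $D$ there is $\beta_D:L_D\times L_D^*\to G(R)$ with $\beta_D(x,y)\beta_D(xy,z)=\beta_D(x,yz)\beta_D(y,z)$, $\alpha(x,y)\beta_D(xy,z)=\alpha(x,yz)\beta_D(y,z)$ and $\beta_D(x,y)=\beta_D(y^*,x^* )$ whenever all occurring values of $\beta_D$ have arguments in $L_D\times L_D^*$; and $R^{\beta_D}[G_D]$ is cellular with cell datum $(\Lambda_D,M_D,C,* )$. Let $R^\alpha[S]$ have the cell datum $(\Lambda,M,C,* )$ where $\Lambda=\{(D,\lambda)\}$ with $(D_1,\lambda_1)\le(D_2,\lambda_2)$ iff $D_1<_{\mathcal D}D_2$ or ($D_1=D_2$, $\lambda_1\le\lambda_2$), $M(D,\lambda)=\mathcal L_D\times M_D(\lambda)$ ($\mathcal L_D$ the set of $\mathcal L$-classes in $D$), $u_L\in L$ with $u_L\,\mathcal R\,1_D$ chosen for each $L\in\mathcal L_D$, and $C^{(D,\lambda)}_{(L,s)(K,t)}=\sum_{g\in G_D}c^\lambda_{st}(g)\beta_D(u_L^*,g)\beta_D(u_L^*g,u_K)(u_L^*gu_K)$ where $C^\lambda_{st}=\sum_g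 c^\lambda_{st}(g)g$. Define the twisted sandwich matrix $P_D^\alpha\in\mathrm{Mat}_{\mathcal L_D}(R^{\beta_D}[G_D])$ by $(P_D^\alpha)_{LK}=0$ if $u_Lu_K^*<_{\mathcal D}D$ and $(P_D^\alpha)_{LK}=\alpha(u_L,u_K^* )\,u_Lu_K^*$ if $u_Lu_K^*\in G_D$ (one of these always holds). Then for all $(D,\lambda)\in\Lambda$ and $(L,s),(K,t)\in M(D,\lambda)$, \[\phi^{(D,\lambda)}\big(C_{(L,s)},C_{(K,t)}\big)=\phi^\lambda_{(P_D^\alpha)_{LK}}(C_s,C_t),\] where the left side is the form for the cellular algebra $R^\alpha[S]$ and the right side is the form for the cellular algebra $R^{\beta_D}[G_D]$.
   Context: Green's relations ($S^1$ = $S$ with identity adjoined): $x\le_{\mathcal R}y$ iff $x\in yS^1$, $x\le_{\mathcal L}y$ iff $x\in S^1y$, $x\le_{\mathcal J}y$ iff $x\in S^1yS^1$; $\mathcal R,\mathcal L,\mathcal J$ associated equivalences; $\mathcal H=\mathcal R\cap\mathcal L$; $\mathcal D$ generated by $\mathcal R\cup\mathcal L$; for finite $S$, $\mathcal D=\mathcal J$ and $<_{\mathcal D}$ is the strict order on $\mathcal D$-classes induced by $\le_{\mathcal J}$ ($x<_{\mathcal D}D$ means the class of $x$ is strictly below $D$). Anti-involution of $S$: $(x^* )^*=x$, $(xy)^*=y^*x^*$; it and $*|_{G_D}$ extend linearly to anti-involutions of the algebras. A twisting satisfies $\alpha(x,y)\alpha(xy,z)=\alpha(x,yz)\alpha(y,z)$;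 $R^\alpha[S]$ has basis $S$ and product $x\cdot y=\alpha(x,y)(xy)$; $R^{\beta_D}[G_D]$ likewise with $\beta_D$. Cellular algebra $A$ with cell datum $(\Lambda,M,C,* )$: $\Lambda$ a finite poset, $\{C^\lambda_{st}: s,t\in M(\lambda)\}$ an $R$-basis, $(C^\lambda_{st})^*=C^\lambda_{ts}$, and for $a\in A$ there are $r_a(s',s)\in R$ with $aC^\lambda_{st}\in\sum_{s'}r_a(s',s)C^\lambda_{s't}+A(<\lambda)$ for all $t$, where $A(<\lambda)=\mathrm{span}\{C^\mu_{uv}:\mu<\lambda\}$. Cell module $W(\lambda)$: free $R$-module on $\{C_s: s\in M(\lambda)\}$. For $a\in A$, the bilinear form $\phi^\lambda_a$ on $W(\lambda)$ is defined on basis elements by: $\phi^\lambda_a(C_s,C_t)$ is the unique element of $R$ with $C^\lambda_{s's}\,a\,C^\lambda_{tt'}\in\phi^\lambda_a(C_s,C_t)C^\lambda_{s't'}+A(<\lambda)$ for all $s',t'\in M(\lambda)$; and $\phi^\lambda=\phi^\lambda_1$ (here $\phi^\lambda(C_s,C_t)$ is likewise the unique scalar with $C^\lambda_{s's}C^\lambda_{tt'}\in\phi^\lambda(C_s,C_t)C^\lambda_{s't'}+A(<\lambda)$). *)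

(* Defs.v *)
From mathcomp Require Import all_boot all_algebra.
From Stdlib Require Import ClassicalEpsilon.
Set Implicit Arguments. Unset Strict Implicit. Unset Printing Implicit Defensive.
Import GRing.Theory.
Local Open Scope ring_scope.

(* Free R-modules R^(I) on a finite set I, represented as {ffun I -> R}.    *)
Definition fsc (R : pzRingType) (I : finType) (c : R) (f : {ffun I -> R})
  : {ffun I -> R} := [ffun i => c * f i].

Definition delta (R : pzRingType) (I : finType) (x : I) : {ffun I -> R} :=
  [ffun i => (i == x)%:R].

Definition strict (T : eqType) (le : rel T) : rel T := fun x y => le x y && (x != y).

Definition lower_span (R : pzRingType) (I : finType) (Lam : finType) (lt : rel Lam)
  (M : Lam -> finType) (C : forall l, M l -> M l -> {ffun I -> R})
  (l : Lam) (v : {ffun I -> R}) : Prop :=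
  exists c : forall m, M m -> M m -> R,
    v = \sum_(m | lt m l) \sum_(s : M m) \sum_(t : M m) fsc (c m s t) (C m s t).

Definition is_cellular (R : comPzRingType) (I : finType)
  (mul : {ffun I -> R} -> {ffun I -> R} -> {ffun I -> R})
  (star : {ffun I -> R} -> {ffun I -> R})
  (Lam : finType) (le : rel Lam) (M : Lam -> finType)
  (C : forall l, M l -> M l -> {ffun I -> R}) : Prop :=
  [/\
      [/\ reflexive le, antisymmetric le & transitive le],
      (* the C^l_{st} form an R-basis *)
      bijective (fun c : {ffun {l : Lam & (M l * M l)%type} -> R} =>
                   \sum_i fsc (c i) (C (tag i) (tagged i).1 (tagged i).2)),
      [/\ involutive star,
          (forall a b, star (mul a b) = mul (star b) (star a)) &
          (forall (c : R) a b, star (fsc c a + b) = fsc c (star a) + star b)],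
      (forall l s t, star (C l s t) = C l t s) &
      (forall a l (s : M l), exists r : M l -> R, forall t : M l,
         lower_span (strict le) C l
           (mul a (C l s t) - \sum_(s' : M l) fsc (r s') (C l s' t)))].

Definition is_phi (R : pzRingType) (I : finType)
  (mul : {ffun I -> R} -> {ffun I -> R} -> {ffun I -> R})
  (Lam : finType) (lt : rel Lam) (M : Lam -> finType)
  (C : forall l, M l -> M l -> {ffun I -> R}) (l : Lam) (s t : M l) (r : R) : Prop :=
  forall s' t' : M l,
    lower_span lt C l (mul (C l s' s) (C l t t') - fsc r (C l s' t')).

Definition phi (R : pzRingType) (I : finType)
  (mul : {ffun I -> R} -> {ffun I -> R} -> {ffun I -> R})
  (Lam : finType) (lt : rel Lam) (M : Lam -> finType)
  (C : forall l, M l -> M l -> {ffun I -> R}) (l : Lam) (s t : M l) : R :=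
  epsilon (inhabits 0) (is_phi mul lt C s t).

Definition is_phi_a (R : pzRingType) (I : finType)
  (mul : {ffun I -> R} -> {ffun I -> R} -> {ffun I -> R})
  (Lam : finType) (lt : rel Lam) (M : Lam -> finType)
  (C : forall l, M l -> M l -> {ffun I -> R}) (a : {ffun I -> R})
  (l : Lam) (s t : M l) (r : R) : Prop :=
  forall s' t' : M l,
    lower_span lt C l (mul (mul (C l s' s) a) (C l t t') - fsc r (C l s' t')).

Definition phi_a (R : pzRingType) (I : finType)
  (mul : {ffun I -> R} -> {ffun I -> R} -> {ffun I -> R})
  (Lam : finType) (lt : rel Lam) (M : Lam -> finType)
  (C : forall l, M l -> M l -> {ffun I -> R}) (a : {ffun I -> R})
  (l : Lam) (s t : M l) : R :=
  epsilon (inhabits 0) (is_phi_a mul lt C a s t).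

(* Green's relations on a finite semigroup (S, mul); S^1 is modelled by     *)
(* option S (None = adjoined identity).                                     *)
Definition lmul1 (S : Type) (mul : S -> S -> S) (a : option S) (x : S) : S :=
  if a is Some a then mul a x else x.
Definition rmul1 (S : Type) (mul : S -> S -> S) (x : S) (b : option S) : S :=
  if b is Some b then mul x b else x.

Definition Rle (S : finType) (mul : S -> S -> S) (x y : S) : bool :=
  [exists b : option S, x == rmul1 mul y b].
Definition Lle (S : finType) (mul : S -> S -> S) (x y : S) : bool :=
  [exists a : option S, x == lmul1 mul a y].
Definition Jle (S : finType) (mul : S -> S -> S) (x y : S) : bool :=
  [exists a : option S, exists b : option S, x == rmul1 mul (lmul1 mul a y) b].

Definition Rrel (S : finType) (mul : S -> S -> S) (x y : S) : bool :=
  Rle mul x y && Rle mul y x.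
Definition Lrel (S : finType) (mul : S -> S -> S) (x y : S) : bool :=
  Lle mul x y && Lle mul y x.
(* for finite S, D = J *)
Definition Jrel (S : finType) (mul : S -> S -> S) (x y : S) : bool :=
  Jle mul x y && Jle mul y x.

Definition is_Dclass (S : finType) (mul : S -> S -> S) (D : {set S}) : bool :=
  [exists x, D == [set y | Jrel mul x y]].
Definition is_Lclass (S : finType) (mul : S -> S -> S) (L : {set S}) : bool :=
  [exists x, L == [set y | Lrel mul x y]].

Definition Dcl (S : finType) (mul : S -> S -> S) : finType :=
  {D : {set S} | is_Dclass mul D}.

Definition Lcl (S : finType) (mul : S -> S -> S) (D : Dcl mul) : finType :=
  {L : {set S} | is_Lclass mul L && (L \subset val D)}.

Definition Dlt (S : finType) (mul : S -> S -> S) (D1 D2 : {set S}) : bool :=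
  [exists x in D1, exists y in D2, Jle mul x y && ~~ Jle mul y x].
Definition LD (S : finType) (mul : S -> S -> S) (one : Dcl mul -> S) (D : Dcl mul)
  : {set S} := [set y | Lrel mul y (one D)].
Definition LDs (S : finType) (mul : S -> S -> S) (star : S -> S) (one : Dcl mul -> S)
  (D : Dcl mul) : {set S} := [set star y | y in LD one D].
Definition GD (S : finType) (mul : S -> S -> S) (star : S -> S) (one : Dcl mul -> S)
  (D : Dcl mul) : {set S} := LD one D :&: LDs star one D.

Definition Gt (S : finType) (mul : S -> S -> S) (star : S -> S) (one : Dcl mul -> S)
  (D : Dcl mul) : finType := {x : S | x \in GD star one D}.

Definition tmul (R : pzRingType) (S : finType) (mul : S -> S -> S) (alpha : S -> S -> R)
  (f g : {ffun S -> R}) : {ffun S -> R} :=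
  [ffun z => \sum_(x : S) \sum_(y : S | mul x y == z) alpha x y * f x * g y].

Definition tstar (R : pzRingType) (S : finType) (star : S -> S) (f : {ffun S -> R})
  : {ffun S -> R} := [ffun x => f (star x)].

Definition gmul (R : pzRingType) (S : finType) (mul : S -> S -> S) (star : S -> S)
  (one : Dcl mul -> S) (D : Dcl mul) (beta : S -> S -> R)
  (f g : {ffun Gt star one D -> R}) : {ffun Gt star one D -> R} :=
  [ffun z => \sum_(x : Gt star one D) \sum_(y : Gt star one D | mul (val x) (val y) == val z)
              beta (val x) (val y) * f x * g y].

(* g |-> g^* on G_D (G_D is *-closed under the standing hypotheses) *)
Definition gstar (R : pzRingType) (S : finType) (mul : S -> S -> S) (star : S -> S)
  (one : Dcl mul -> S) (D : Dcl mul) (f : {ffun Gt star one D -> R})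
  : {ffun Gt star one D -> R} :=
  [ffun g => f (insubd g (star (val g)))].

Definition bigC (R : pzRingType) (S : finType) (mul : S -> S -> S) (star : S -> S)
  (one : Dcl mul -> S) (beta : Dcl mul -> S -> S -> R) (u : {set S} -> S)
  (Lam : Dcl mul -> finType) (M : forall D, Lam D -> finType)
  (C : forall D (l : Lam D), M D l -> M D l -> {ffun Gt star one D -> R})
  (D : Dcl mul) (l : Lam D) (L : Lcl D) (s : M D l) (K : Lcl D) (t : M D l)
  : {ffun S -> R} :=
  let uL := u (val L) in let uK := u (val K) in
  \sum_(g : Gt star one D)
     fsc (C D l s t g * beta D (star uL) (val g) * beta D (mul (star uL) (val g)) uK)
         (delta R (mul (mul (star uL) (val g)) uK)).

Definition BLam (S : finType) (mul : S -> S -> S) (Lam : Dcl mul -> finType) : finType :=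
  {D : Dcl mul & Lam D}.

Definition Ble (S : finType) (mul : S -> S -> S) (Lam : Dcl mul -> finType)
  (le : forall D, rel (Lam D)) : rel (BLam Lam) :=
  fun p q => Dlt mul (val (tag p)) (val (tag q))
             || ((tag p == tag q) && le (tag q) (tagged_as q p) (tagged q)).

Definition BM (S : finType) (mul : S -> S -> S) (Lam : Dcl mul -> finType)
  (M : forall D, Lam D -> finType) (p : BLam Lam) : finType :=
  (Lcl (tag p) * M (tag p) (tagged p))%type.

Definition BC (R : pzRingType) (S : finType) (mul : S -> S -> S) (star : S -> S)
  (one : Dcl mul -> S) (beta : Dcl mul -> S -> S -> R) (u : {set S} -> S)
  (Lam : Dcl mul -> finType) (M : forall D, Lam D -> finType)
  (C : forall D (l : Lam D), M D l -> M D l -> {ffun Gt star one D -> R})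
  (p : BLam Lam) (x y : BM M p) : {ffun S -> R} :=
  @bigC R S mul star one beta u Lam M C (tag p) (tagged p) x.1 x.2 y.1 y.2.

(* the twisted sandwich matrix entry (P_D^alpha)_{LK} in R^{beta_D}[G_D]:
   alpha(u_L, u_K^* ) u_L u_K^* if u_L u_K^* \in G_D, and 0 otherwise
   (i.e. when u_L u_K^* <_D D) *)
Definition sandwich (R : pzRingType) (S : finType) (mul : S -> S -> S) (star : S -> S)
  (one : Dcl mul -> S) (alpha : S -> S -> R) (u : {set S} -> S)
  (D : Dcl mul) (L K : Lcl D) : {ffun Gt star one D -> R} :=
  let uL := u (val L) in let uK := u (val K) in
  [ffun g => if val g == mul uL (star uK) then alpha uL (star uK) else 0].

(* Main.v *)
Require Import Defs.
From mathcomp Require Import all_boot all_algebra zify ring.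
From Stdlib Require Import ClassicalEpsilon FunctionalExtensionality PropExtensionality.
Set Implicit Arguments. Unset Strict Implicit. Unset Printing Implicit Defensive.
Import GRing.Theory.

Section Pow.
Variables (S : finType) (mul : S -> S -> S).
Hypothesis mulA : forall x y z, mul x (mul y z) = mul (mul x y) z.

Definition pw z n := iter n (fun y => mul y z) z.

Lemma pwS z n : pw z n.+1 = mul (pw z n) z. Proof. by []. Qed.
Lemma pwD z m n : mul (pw z m) (pw z n) = pw z (m + n).+1.
Proof.
elim: n => [|n IH]; first by rewrite addn0.
by rewrite pwS mulA IH addnS.
Qed.
Lemma pw_comm z n : mul z (pw z n) = mul (pw z n) z.
Proof. by rewrite -[z in mul z _]/(pw z 0) pwD -pwS. Qed.

Lemma pw_shift z i j r : pw z i = pw z j -> pw z (r + i) = pw z (r + j).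
Proof. by move=> h; rewrite /pw !iterD -/(pw z i) -/(pw z j) h. Qed.

Lemma pw_idem z : exists n, mul (pw z n) (pw z n) = pw z n.
Proof.
pose f (i : 'I_(#|S|.+1)) := pw z i.
have [i [j [lt_ij eq_ij]]] : exists i j, i < j /\ pw z i = pw z j.
  case E: [exists i, exists j, (i != j) && (f i == f j)].
  - move: E => /existsP[i /existsP[j /andP[ne /eqP eq]]].
    case: (ltngtP i j) => [lt|lt|eq']; first by exists i, j.
    + by exists j, i.
    + by move: ne; rewrite (val_inj eq') eqxx.
  - have inj : injective f.
      move=> i j h; apply/eqP; apply/negPn/negP => hne; move/negbT: E => /negP; apply.
      by apply/existsP; exists i; apply/existsP; exists j; rewrite hne h eqxx.
    by have := @leq_card _ _ f inj; rewrite card_ord ltnn.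
set d := j - i.
have per : forall t k, i <= k -> pw z k = pw z (k + t * d).
  elim=> [|t IH] k hk; first by rewrite mul0n addn0.
  rewrite IH //; have -> : k + t.+1 * d = (k - i + t * d) + j by rewrite /d; lia.
  by rewrite -(pw_shift _ eq_ij); congr pw; rewrite /d; lia.
exists ((i.+1 * d).-1).
rewrite pwD (per i.+1 ((i.+1 * d).-1)); last by rewrite /d; nia.
by congr pw; rewrite /d; nia.
Qed.

Lemma stab_iter a x b n : x = mul (mul a x) b -> x = mul (mul (pw a n) x) (pw b n).
Proof.
move=> h; elim: n => [//|n IH].
rewrite {1}IH {1}h !pwS -[mul (pw b n) b]pw_comm.
by rewrite !mulA.
Qed.

Lemma stab_right a x b : x = mul (mul a x) b -> x = mul x b \/ exists c, x = mul x (mul b c).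
Proof.
move=> h; case: (pw_idem b) => n hn.
have E := stab_iter n h.
have hx : x = mul x (pw b n) by rewrite {2}E -mulA hn -E.
clear E; case: n hn hx => [|n] hn hx; first by left.
by right; exists (pw b n); rewrite pw_comm -pwS.
Qed.

Lemma stab_left a x b : x = mul (mul a x) b -> x = mul a x \/ exists c, x = mul (mul c a) x.
Proof.
move=> h; case: (pw_idem a) => n hn.
have E := stab_iter n h.
have hx : x = mul (pw a n) x by rewrite {2}E !mulA hn -E.
clear E; case: n hn hx => [|n] hn hx; first by left.
by right; exists (pw a n).
Qed.
End Pow.
Local Open Scope ring_scope.

Section Semi.
Variables (S : finType) (mul : S -> S -> S) (star : S -> S).
Hypothesis mulA : forall x y z, mul x (mul y z) = mul (mul x y) z.
Hypothesis starK : forall x, star (star x) = x.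
Hypothesis starM : forall x y, star (mul x y) = mul (star y) (star x).

Definition ocomb (a c : option S) : option S :=
  match a, c with Some a, Some c => Some (mul a c) | Some a, None => Some a | None, c => c end.

Lemma lmul1_comb a c z : lmul1 mul a (lmul1 mul c z) = lmul1 mul (ocomb a c) z.
Proof. by case: a => [a|]; case: c => [c|] //=; rewrite mulA. Qed.
Lemma rmul1_comb z d b : rmul1 mul (rmul1 mul z d) b = rmul1 mul z (ocomb d b).
Proof. by case: b => [b|]; case: d => [d|] //=; rewrite mulA. Qed.
Lemma lrmul1 a y b : rmul1 mul (lmul1 mul a y) b = lmul1 mul a (rmul1 mul y b).
Proof. by case: a => [a|]; case: b => [b|] //=; rewrite mulA. Qed.

Lemma Lle_refl x : Lle mul x x.
Proof. by apply/existsP; exists None. Qed.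
Lemma Rle_refl x : Rle mul x x.
Proof. by apply/existsP; exists None. Qed.
Lemma Jle_refl x : Jle mul x x.
Proof. by apply/existsP; exists None; apply/existsP; exists None. Qed.

Lemma Lle_trans x y z : Lle mul x y -> Lle mul y z -> Lle mul x z.
Proof.
move=> /existsP[a /eqP->] /existsP[b /eqP->]; apply/existsP.
by exists (ocomb a b); rewrite lmul1_comb.
Qed.
Lemma Rle_trans x y z : Rle mul x y -> Rle mul y z -> Rle mul x z.
Proof.
move=> /existsP[a /eqP->] /existsP[b /eqP->]; apply/existsP.
by exists (ocomb b a); rewrite rmul1_comb.
Qed.
Lemma Jle_trans x y z : Jle mul x y -> Jle mul y z -> Jle mul x z.
Proof.
move=> /existsP[a /existsP[b /eqP->]] /existsP[c /existsP[d /eqP->]].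
apply/existsP; exists (ocomb a c); apply/existsP; exists (ocomb d b).
by rewrite !lrmul1 rmul1_comb lmul1_comb.
Qed.
Lemma Lle_Jle x y : Lle mul x y -> Jle mul x y.
Proof. by move=> /existsP[a /eqP->]; apply/existsP; exists a; apply/existsP; exists None. Qed.
Lemma Rle_Jle x y : Rle mul x y -> Jle mul x y.
Proof. by move=> /existsP[a /eqP->]; apply/existsP; exists None; apply/existsP; exists a. Qed.

Lemma Lrel_sym x y : Lrel mul x y = Lrel mul y x.
Proof. by rewrite /Lrel andbC. Qed.
Lemma Lrel_trans x y z : Lrel mul x y -> Lrel mul y z -> Lrel mul x z.
Proof. by move=> /andP[a b] /andP[c d]; rewrite /Lrel (Lle_trans a c) (Lle_trans d b). Qed.
Lemma Jrel_sym x y : Jrel mul x y = Jrel mul y x.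
Proof. by rewrite /Jrel andbC. Qed.
Lemma Jrel_trans x y z : Jrel mul x y -> Jrel mul y z -> Jrel mul x z.
Proof. by move=> /andP[a b] /andP[c d]; rewrite /Jrel (Jle_trans a c) (Jle_trans d b). Qed.

Lemma Jle_star x y : Jle mul x y -> Jle mul (star x) (star y).
Proof.
move=> /existsP[a /existsP[b /eqP->]]; apply/existsP; exists (omap star b).
apply/existsP; exists (omap star a).
by case: a => [a|]; case: b => [b|] //=; rewrite ?starM ?mulA.
Qed.
Lemma Jrel_star x y : Jrel mul x y -> Jrel mul (star x) (star y).
Proof. by move=> /andP[a b]; rewrite /Jrel !Jle_star. Qed.

Lemma Lle_ex y x f : y = mul f y -> Lle mul y x -> exists a, y = mul a x.
Proof. by move=> hf /existsP[[a|] /eqP /= h]; [exists a | exists f; rewrite -h]. Qed.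
Lemma Rle_ex y x f : y = mul y f -> Rle mul y x -> exists a, y = mul x a.
Proof. by move=> hf /existsP[[a|] /eqP /= h]; [exists a | exists f; rewrite -h]. Qed.

Lemma Dcl_Jrel (D : Dcl mul) x y : x \in val D -> y \in val D -> Jrel mul x y.
Proof.
case: D => D /= /existsP[x0 /eqP ->]; rewrite !inE => h1 h2.
by apply: Jrel_trans h2; rewrite Jrel_sym.
Qed.
Lemma Dcl_mem (D : Dcl mul) x y : x \in val D -> Jrel mul x y -> y \in val D.
Proof.
case: D => D /= /existsP[x0 /eqP ->]; rewrite !inE => h1 h2.
exact: Jrel_trans h2.
Qed.
Lemma Dcl_eq (D1 D2 : Dcl mul) x : x \in val D1 -> x \in val D2 -> D1 = D2.
Proof.
move=> h1 h2; apply: val_inj; apply/setP => y; apply/idP/idP => hy.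
- by apply: (Dcl_mem h2); apply: Dcl_Jrel h1 hy.
- by apply: (Dcl_mem h1); apply: Dcl_Jrel h2 hy.
Qed.

Variable one : Dcl mul -> S.
Hypothesis one_idem : forall D, mul (one D) (one D) = one D.
Hypothesis one_star : forall D, star (one D) = one D.

Definition inL D x := x = mul x (one D) /\ exists a, one D = mul a x.
Definition inR D x := x = mul (one D) x /\ exists b, one D = mul x b.
Definition inG D x := inL D x /\ inR D x.

Lemma Lle_idem D x : Lle mul x (one D) -> x = mul x (one D).
Proof. by move=> /existsP[[a|] /eqP ->] /=; rewrite -?mulA one_idem. Qed.
Lemma Rle_idem D x : Rle mul x (one D) -> x = mul (one D) x.
Proof. by move=> /existsP[[a|] /eqP ->] /=; rewrite ?mulA one_idem. Qed.

Lemma LD_inL D x : x \in LD one D <-> inL D x.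
Proof.
rewrite inE; split.
- move=> /andP[h1 h2]; split; first exact: Lle_idem.
  by apply: (Lle_ex (f := one D)) => //; rewrite one_idem.
- case=> h1 [a h2]; apply/andP; split; apply/existsP.
  + by exists (Some x); rewrite /= -h1.
  + by exists (Some a); rewrite /= -h2.
Qed.

Lemma Rrel_inR D x : Rrel mul x (one D) -> inR D x.
Proof.
move=> /andP[h1 h2]; split; first exact: Rle_idem.
by apply: (Rle_ex (f := one D)) => //; rewrite one_idem.
Qed.

Lemma inL_star D x : inL D x -> inR D (star x).
Proof.
case=> h1 [a h2]; split; first by rewrite -one_star -starM -h1.
by exists (star a); rewrite -starM -h2 one_star.
Qed.
Lemma inR_star D x : inR D x -> inL D (star x).
Proof.
case=> h1 [a h2]; split; first by rewrite -one_star -starM -h1.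
by exists (star a); rewrite -starM -h2 one_star.
Qed.
Lemma inG_star D x : inG D x -> inG D (star x).
Proof. by case=> h1 h2; split; [apply: inR_star | apply: inL_star]. Qed.

Lemma LDs_inR D x : x \in LDs star one D <-> inR D x.
Proof.
split.
- by case/imsetP=> y /LD_inL hy ->; apply: inL_star.
- move=> h; apply/imsetP; exists (star x); last by rewrite starK.
  by apply/LD_inL; apply: inR_star.
Qed.

Lemma GD_inG D x : x \in GD star one D <-> inG D x.
Proof.
rewrite inE; split.
- by case/andP=> /LD_inL h1 /LDs_inR h2.
- by case=> /LD_inL h1 /LDs_inR h2; rewrite h1 h2.
Qed.

Lemma inL_mulG D x g : inL D x -> inG D g -> inL D (mul x g).
Proof.
case=> hx [a ha] [[hg1 [c hc]] [hg2 _]]; split; first by rewrite -mulA -hg1.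
by exists (mul c a); rewrite -mulA (mulA a) -ha -hg2.
Qed.
Lemma inR_mulG D g y : inG D g -> inR D y -> inR D (mul g y).
Proof.
move=> hg hy; have := inL_mulG (inR_star hy) (inG_star hg).
by rewrite -starM => /inL_star; rewrite starK.
Qed.
Lemma inG_mul D g h : inG D g -> inG D h -> inG D (mul g h).
Proof.
move=> hg hh; split; first by apply: inL_mulG => //; case: hg.
by apply: inR_mulG => //; case: hh.
Qed.

Lemma stab_G D w v A B : inR D w -> inL D v ->
  one D = mul (mul A (mul w v)) B -> inG D (mul w v).
Proof.
case=> hw _ [hv _] h.
have pe : mul (one D) (mul w v) = mul w v by rewrite mulA -hw.
have ep : mul (mul w v) (one D) = mul w v by rewrite -mulA -hv.
split; split => //.
- have h' : one D = mul (mul (mul A (mul w v)) (one D)) B by rewrite -(mulA A) ep.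
  case: (stab_left mulA h') => [E|[c E]].
  + by exists A; rewrite {1}E -!mulA -hv.
  + by exists (mul c A); rewrite {1}E -!mulA -hv.
- have h' : one D = mul (mul A (one D)) (mul (mul w v) B) by rewrite -mulA (mulA (one D)) pe mulA.
  case: (stab_right mulA h') => [E|[c E]].
  + by exists B; rewrite {1}E !mulA -hw.
  + by exists (mul B c); rewrite {1}E !mulA -hw.
Qed.

Lemma Lle_star x y : Lle mul x y -> Rle mul (star x) (star y).
Proof. by move=> /existsP[[a|] /eqP ->]; apply/existsP; [exists (Some (star a)) | exists None]; rewrite /= ?starM. Qed.
Lemma Rle_star x y : Rle mul x y -> Lle mul (star x) (star y).
Proof. by move=> /existsP[[a|] /eqP ->]; apply/existsP; [exists (Some (star a)) | exists None]; rewrite /= ?starM. Qed.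
Lemma Lrel_Jrel x y : Lrel mul x y -> Jrel mul x y.
Proof. by case/andP=> a b; rewrite /Jrel !Lle_Jle. Qed.

Lemma Lle_ex' x y f : y = mul f y -> Lle mul x y -> exists c, x = mul c y.
Proof. by move=> hf /existsP[[a|] /eqP /= ->]; [exists a | exists f]. Qed.
Lemma Rle_ex' x y f : y = mul y f -> Rle mul x y -> exists c, x = mul y c.
Proof. by move=> hf /existsP[[a|] /eqP /= ->]; [exists a | exists f]. Qed.

Lemma Lcl_closed (D : Dcl mul) (L : Lcl D) x y : x \in val L -> Lrel mul x y -> y \in val L.
Proof.
case: L => L /= /andP[/existsP[x0 /eqP ->] _]; rewrite !inE => h1 h2.
exact: Lrel_trans h2.
Qed.
Lemma Lcl_Lrel (D : Dcl mul) (L : Lcl D) x y : x \in val L -> y \in val L -> Lrel mul x y.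
Proof.
case: L => L /= /andP[/existsP[x0 /eqP ->] _]; rewrite !inE => h1 h2.
by apply: Lrel_trans h2; rewrite Lrel_sym.
Qed.
Lemma Lcl_eq (D : Dcl mul) (L1 L2 : Lcl D) x : x \in val L1 -> x \in val L2 -> L1 = L2.
Proof.
move=> h1 h2; apply: val_inj; apply/setP => y; apply/idP/idP => hy.
- by apply: (Lcl_closed h2); apply: Lcl_Lrel h1 hy.
- by apply: (Lcl_closed h1); apply: Lcl_Lrel h2 hy.
Qed.
Lemma Lcl_sub (D : Dcl mul) (L : Lcl D) x : x \in val L -> x \in val D.
Proof. by case: L => L /= /andP[_ /subsetP]; apply. Qed.

Variable u : {set S} -> S.
Hypothesis u_in : forall (D : Dcl mul) (L : Lcl D), u (val L) \in val L.
Hypothesis u_R : forall (D : Dcl mul) (L : Lcl D), Rrel mul (u (val L)) (one D).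
Hypothesis one_in : forall D, one D \in val D.

Definition pt (D : Dcl mul) (L : Lcl D) (g : S) (K : Lcl D) := mul (mul (star (u (val L))) g) (u (val K)).

Lemma uR (D : Dcl mul) (L : Lcl D) : inR D (u (val L)).
Proof. exact: Rrel_inR. Qed.
Lemma vL (D : Dcl mul) (L : Lcl D) : inL D (star (u (val L))).
Proof. exact/inR_star/uR. Qed.

Lemma pt_inK (D : Dcl mul) (L K : Lcl D) g : inG D g -> pt L g K \in val K.
Proof.
move=> [[_ [z hz]] [hg2 _]]; apply: (Lcl_closed (u_in K)); rewrite /pt.
have [hw _] := uR K; have [_ [a ha]] := vL L.
apply/andP; split; apply/existsP.
- exists (Some (mul z a)); apply/eqP => /=.
  by rewrite !mulA -(mulA z) -ha -(mulA z) -hg2 -hz -hw.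
- by exists (Some (mul (star (u (val L))) g)).
Qed.

Lemma pt_star (D : Dcl mul) (L K : Lcl D) g : star (pt L g K) = pt K (star g) L.
Proof. by rewrite /pt !starM starK mulA. Qed.

Lemma pt_inL (D : Dcl mul) (L K : Lcl D) g : inG D g -> star (pt L g K) \in val L.
Proof. by move=> hg; rewrite pt_star; apply: pt_inK; apply: inG_star. Qed.

Lemma pt_inD (D : Dcl mul) (L K : Lcl D) g : inG D g -> pt L g K \in val D.
Proof. by move=> hg; apply: (@Lcl_sub D K); apply: pt_inK. Qed.

Lemma pt_inj (D : Dcl mul) (L1 K1 L2 K2 : Lcl D) g1 g2 : inG D g1 -> inG D g2 ->
  pt L1 g1 K1 = pt L2 g2 K2 -> [/\ L1 = L2, K1 = K2 & g1 = g2].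
Proof.
move=> h1 h2 E.
have eK : K1 = K2.
  apply: (@Lcl_eq D K1 K2 (pt L1 g1 K1)); first exact: pt_inK.
  by rewrite E; apply: pt_inK.
have eL : L1 = L2.
  apply: (@Lcl_eq D L1 L2 (star (pt L1 g1 K1))); first exact: pt_inL.
  by rewrite E; apply: pt_inL.
subst; split => //; move: E; rewrite /pt.
have [_ [a ha]] := vL L2; have [_ [b hb]] := uR K2.
have key g : inG D g -> g = mul (mul a (pt L2 g K2)) b.
  move=> [[hg1 _] [hg2 _]]; rewrite /pt.
  by rewrite -!mulA -hb -hg1 !mulA -ha -hg2.
by move=> E; rewrite (key _ h1) (key _ h2) /pt E.
Qed.

Lemma Jle_idem (D : Dcl mul) q : Jle mul (one D) q -> exists A B, one D = mul (mul A q) B.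
Proof.
move=> /existsP[a /existsP[b /eqP E]].
have E2 : one D = mul (mul (one D) (one D)) (one D) by rewrite !one_idem.
rewrite {3}E in E2.
move: E2; clear E; case: a => [a|]; case: b => [b|] /= E2.
- by exists (mul (one D) a), (mul b (one D)); rewrite {1}E2 !mulA.
- by exists (mul (one D) a), (one D); rewrite {1}E2 !mulA.
- by exists (one D), (mul b (one D)); rewrite {1}E2 !mulA.
- by exists (one D), (one D).
Qed.

Lemma below_class (D : Dcl mul) q : Jle mul q (one D) -> ~~ Jle mul (one D) q ->
  exists D1 : Dcl mul, [/\ q \in val D1, Dlt mul (val D1) (val D) & D1 != D].
Proof.
move=> h1 h2.
have hD : is_Dclass mul [set y | Jrel mul q y] by apply/existsP; exists q.
have hq : q \in [set y | Jrel mul q y] by rewrite inE /Jrel Jle_refl.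
pose D1 : Dcl mul := exist (fun X : {set S} => is_Dclass mul X) _ hD.
exists D1; split => //.
- apply/existsP; exists q; rewrite hq /=; apply/existsP; exists (one D).
  by rewrite one_in h1 h2.
- apply/eqP => E; have : q \in val D1 by []. rewrite E => {}hq.
  by have := Dcl_Jrel hq (one_in D); rewrite /Jrel (negbTE h2) andbF.
Qed.

Lemma junk_below (D : Dcl mul) (L' L K K' : Lcl D) g h :
  inG D g -> inG D h -> ~ inG D (mul (u (val L)) (star (u (val K)))) ->
  let q := mul (mul (star (u (val L'))) g) (mul (mul (u (val L)) (star (u (val K)))) (mul h (u (val K')))) in
  exists D1 : Dcl mul, [/\ q \in val D1, Dlt mul (val D1) (val D) & D1 != D].
Proof.
move=> hg hh hp q; apply: below_class.
- have [hv _] := vL L'; apply/existsP; exists (Some (star (u (val L')))); apply/existsP.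
  exists (Some (mul g (mul (mul (u (val L)) (star (u (val K)))) (mul h (u (val K')))))).
  by rewrite /= -hv /q !mulA.
- apply/negP => /Jle_idem[A [B E]]; apply: hp.
  apply: (@stab_G D _ _ (mul (mul A (star (u (val L')))) g) (mul (mul h (u (val K'))) B)).
  + exact: uR.
  + exact: vL.
  + by rewrite E /q !mulA.
Qed.

Lemma Lcl_of (D : Dcl mul) x : x \in val D -> {L : Lcl D | x \in val L}.
Proof.
move=> hx.
have hL : is_Lclass mul [set y | Lrel mul x y] && ([set y | Lrel mul x y] \subset val D).
  apply/andP; split; first by apply/existsP; exists x.
  by apply/subsetP => y; rewrite inE => /Lrel_Jrel; apply: Dcl_mem.
pose L : Lcl D := exist (fun X : {set S} => is_Lclass mul X && (X \subset val D)) _ hL.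
by exists L; rewrite /= inE /Lrel Lle_refl.
Qed.

Lemma decomp (D : Dcl mul) x : x \in val D ->
  exists (L K : Lcl D) g, inG D g /\ x = pt L g K.
Proof.
move=> hx.
have hxs : star x \in val D.
  apply: (Dcl_mem (one_in D)); rewrite -(one_star D); apply: Jrel_star.
  exact: Dcl_Jrel (one_in D) hx.
have [L hL] := Lcl_of hxs; have [K hK] := Lcl_of hx.
exists L, K.
have [hv _] := vL L; have [hw [b hb]] := uR K.
have [_ [a0 ha0]] := uR L.
have ha : one D = mul (star a0) (star (u (val L))) by rewrite -starM -ha0 one_star.
have xRv : Rle mul x (star (u (val L))).
  by rewrite -[x]starK; apply: Lle_star; case/andP: (Lcl_Lrel hL (u_in L)).
have vRx : Rle mul (star (u (val L))) x.
  by rewrite -[x]starK; apply: Lle_star; case/andP: (Lcl_Lrel hL (u_in L)).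
have [xLw wLx] : Lle mul x (u (val K)) /\ Lle mul (u (val K)) x by apply/andP; apply: Lcl_Lrel hK (u_in K).
have [c hc] := Rle_ex' hv xRv.
have [d hd] := Rle_ex hv vRx.
have [y hy] := Lle_ex hw wLx.
have [d' hd'] := Lle_ex' hw xLw.
have vax : mul (mul (star (u (val L))) (star a0)) x = x by rewrite hc !mulA -(mulA (star (u (val L)))) -ha -hv.
have xbw : mul (mul x b) (u (val K)) = x by rewrite hd' -!mulA (mulA (u (val K))) -hb -hw.
exists (mul (mul (mul (mul (one D) (star a0)) x) b) (one D)); split.
- split; split.
  + by rewrite -!mulA one_idem.
  + exists (mul y (star (u (val L)))).
    by rewrite !mulA -(mulA y (star (u (val L))) (one D)) -hv -(mulA y (star (u (val L)))) -(mulA y _ x) vax -hy -hb one_idem.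
  + by rewrite !mulA one_idem.
  + exists (mul (u (val K)) d).
    rewrite !mulA -(mulA _ (one D) (u (val K))) -hw -(mulA _ x b) -(mulA _ (mul x b)) xbw.
    by rewrite -(mulA _ x d) -hd -(mulA (one D)) -ha one_idem.
- rewrite /pt.
  by rewrite !mulA -hv vax -(mulA _ (one D) (u (val K))) -hw xbw.
Qed.
End Semi.

Local Open Scope ring_scope.

Section Span.
Local Unset Implicit Arguments.
Variables (R : comPzRingType) (I : finType) (Lam : finType) (lt : rel Lam)
  (M : Lam -> finType) (C : forall l, M l -> M l -> {ffun I -> R}) (l : Lam).
Local Set Implicit Arguments.

Lemma fscE c (f : {ffun I -> R}) i : fsc c f i = c * f i.
Proof. by rewrite ffunE. Qed.

Lemma spanE (c : forall m, M m -> M m -> R) i :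
  (\sum_(m | lt m l) \sum_(s : M m) \sum_(t : M m) fsc (c m s t) (C m s t)) i
  = \sum_(m | lt m l) \sum_(s : M m) \sum_(t : M m) c m s t * C m s t i.
Proof.
rewrite sum_ffunE; apply: eq_bigr => m _; rewrite sum_ffunE; apply: eq_bigr => s _.
by rewrite sum_ffunE; apply: eq_bigr => t _; rewrite fscE.
Qed.

Local Notation LS := (lower_span lt C l).

Lemma ls0 : LS 0.
Proof.
exists (fun _ _ _ => 0); apply/ffunP => i; rewrite spanE ffunE.
by rewrite big1 // => m _; rewrite big1 // => s _; rewrite big1 // => t _; rewrite mul0r.
Qed.

Lemma lsD v w : LS v -> LS w -> LS (v + w).
Proof.
move=> [c1 ->] [c2 ->]; exists (fun m s t => c1 m s t + c2 m s t).
apply/ffunP => i; rewrite ffunE !spanE -big_split; apply: eq_bigr => m _.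
rewrite -big_split; apply: eq_bigr => s _; rewrite -big_split; apply: eq_bigr => t _.
by rewrite mulrDl.
Qed.

Lemma lsZ k v : LS v -> LS (fsc k v).
Proof.
move=> [c ->]; exists (fun m s t => k * c m s t).
apply/ffunP => i; rewrite fscE !spanE mulr_sumr; apply: eq_bigr => m _.
rewrite mulr_sumr; apply: eq_bigr => s _; rewrite mulr_sumr; apply: eq_bigr => t _.
by rewrite mulrA.
Qed.

Lemma fscN1 (v : {ffun I -> R}) : fsc (-1) v = - v.
Proof. by apply/ffunP => i; rewrite fscE !ffunE mulN1r. Qed.

Lemma lsN v : LS v -> LS (- v).
Proof. by move=> h; rewrite -fscN1; apply: lsZ. Qed.

Lemma lsB v w : LS v -> LS w -> LS (v - w).
Proof. by move=> h1 h2; apply: lsD => //; apply: lsN. Qed.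

Lemma ls_sum (J : Type) (r : seq J) (P : pred J) (F : J -> {ffun I -> R}) :
  (forall j, P j -> LS (F j)) -> LS (\sum_(j <- r | P j) F j).
Proof. by move=> h; apply: big_ind => //; [exact: ls0 | exact: lsD]. Qed.

Definition PT (m : Lam) : eqType := (M m * M m)%type.

Lemma ls_single m (x y : M m) r : lt m l -> LS (fsc r (C m x y)).
Proof.
move=> hm.
exists (fun m' s t => if Tagged PT ((s, t) : PT m') == Tagged PT ((x, y) : PT m) then r else 0).
apply/ffunP => i; rewrite spanE fscE (bigD1 m) //=.
rewrite [X in _ + X]big1; last first.
  move=> m' /andP[_ ne]; rewrite big1 // => s _; rewrite big1 // => t _.
  case: eqP => [/(congr1 tag) /= E|]; last by rewrite mul0r.
  by rewrite E eqxx in ne.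
rewrite addr0 (bigD1 x) //= [X in _ + X]big1; last first.
  move=> s ne; rewrite big1 // => t _; rewrite eq_Tagged /=.
  by rewrite xpair_eqE (negbTE ne) mul0r.
rewrite addr0 (bigD1 y) //= [X in _ + X]big1; last first.
  by move=> t ne; rewrite eq_Tagged /= xpair_eqE (negbTE ne) andbF mul0r.
by rewrite addr0 eq_Tagged /= !eqxx.
Qed.

Lemma ls_eqB a b c : LS (a - b) -> LS (a - c) <-> LS (b - c).
Proof.
move=> h; split => h2.
- have -> : b - c = (a - c) - (a - b) by apply/esym; rewrite opprB addrC -addrA addKr.
  exact: lsB.
- have -> : a - c = (a - b) + (b - c) by apply/esym; rewrite addrA subrK.
  exact: lsD.
Qed.
End Span.

Local Open Scope ring_scope.

Section Tmul.
Variables (R : comPzRingType) (S : finType) (mul : S -> S -> S) (alpha : S -> S -> R).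

Lemma deltaE (x z : S) : delta R x z = (z == x)%:R.
Proof. by rewrite ffunE. Qed.

Lemma sum_fsc_delta (J : finType) (a : J -> R) (x : J -> S) z :
  (\sum_j fsc (a j) (delta R (x j))) z = \sum_j a j * (z == x j)%:R.
Proof. by rewrite sum_ffunE; apply: eq_bigr => j _; rewrite fscE deltaE. Qed.

Lemma tmulE (F G : {ffun S -> R}) z :
  tmul mul alpha F G z = \sum_x \sum_y (mul x y == z)%:R * (alpha x y * F x * G y).
Proof.
rewrite ffunE; apply: eq_bigr => x _; rewrite big_mkcond /=; apply: eq_bigr => y _.
by case: eqP; rewrite ?mul1r ?mul0r.
Qed.

Lemma tmul_suml (J : finType) (F : J -> {ffun S -> R}) G :
  tmul mul alpha (\sum_j F j) G = \sum_j tmul mul alpha (F j) G.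
Proof.
apply/ffunP => z; rewrite tmulE [RHS]sum_ffunE.
under [RHS]eq_bigr => j _ do rewrite tmulE.
rewrite [RHS]exchange_big /=; apply: eq_bigr => x _.
rewrite [RHS]exchange_big /=; apply: eq_bigr => y _.
by rewrite sum_ffunE mulr_sumr !mulr_suml mulr_sumr.
Qed.

Lemma tmul_sumr (J : finType) F (G : J -> {ffun S -> R}) :
  tmul mul alpha F (\sum_j G j) = \sum_j tmul mul alpha F (G j).
Proof.
apply/ffunP => z; rewrite tmulE [RHS]sum_ffunE.
under [RHS]eq_bigr => j _ do rewrite tmulE.
rewrite [RHS]exchange_big /=; apply: eq_bigr => x _.
rewrite [RHS]exchange_big /=; apply: eq_bigr => y _.
by rewrite sum_ffunE !mulr_sumr.
Qed.

Lemma tmul_fscl c F G : tmul mul alpha (fsc c F) G = fsc c (tmul mul alpha F G).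
Proof.
apply/ffunP => z; rewrite fscE !tmulE mulr_sumr; apply: eq_bigr => x _.
rewrite mulr_sumr; apply: eq_bigr => y _; rewrite fscE.
by rewrite !mulrA [_ * c]mulrC -!mulrA; congr (_ * _); rewrite !mulrA [_ * c]mulrC.
Qed.

Lemma tmul_fscr c F G : tmul mul alpha F (fsc c G) = fsc c (tmul mul alpha F G).
Proof.
apply/ffunP => z; rewrite fscE !tmulE mulr_sumr; apply: eq_bigr => x _.
rewrite mulr_sumr; apply: eq_bigr => y _; rewrite fscE.
by rewrite !mulrA [_ * c]mulrC -!mulrA; congr (_ * _); rewrite !mulrA [_ * c]mulrC.
Qed.

Lemma tmul_delta x0 y0 :
  tmul mul alpha (delta R x0) (delta R y0) = fsc (alpha x0 y0) (delta R (mul x0 y0)).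
Proof.
apply/ffunP => z; rewrite tmulE fscE deltaE (bigD1 x0) //= [X in _ + X]big1; last first.
  by move=> x ne; rewrite big1 // => y _; rewrite deltaE (negbTE ne) mulr0 mul0r mulr0.
rewrite addr0 (bigD1 y0) //= [X in _ + X]big1; last first.
  by move=> y ne; rewrite !deltaE (negbTE ne) mulr0 mulr0.
by rewrite addr0 !deltaE !eqxx !mulr1 eq_sym mulrC.
Qed.

Lemma tmul_sums (J K : finType) (a : J -> R) (x : J -> S) (b : K -> R) (y : K -> S) :
  tmul mul alpha (\sum_j fsc (a j) (delta R (x j))) (\sum_k fsc (b k) (delta R (y k)))
  = \sum_j \sum_k fsc (alpha (x j) (y k) * a j * b k) (delta R (mul (x j) (y k))).
Proof.
rewrite tmul_suml; apply: eq_bigr => j _; rewrite tmul_sumr; apply: eq_bigr => k _.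
rewrite tmul_fscl tmul_fscr tmul_delta.
by apply/ffunP => z; rewrite !fscE; ring.
Qed.
End Tmul.

Local Open Scope ring_scope.

Section Main.
Local Unset Implicit Arguments.
Variables (S : finType) (mul : S -> S -> S) (star : S -> S).
Hypothesis mulA : forall x y z, mul x (mul y z) = mul (mul x y) z.
Hypothesis starK : forall x, star (star x) = x.
Hypothesis starM : forall x y, star (mul x y) = mul (star y) (star x).
Variables (R : comPzRingType) (alpha : S -> S -> R).
Hypothesis alpha_tw : forall x y z,
      alpha x y * alpha (mul x y) z = alpha x (mul y z) * alpha y z.
Hypothesis alpha_star : forall x y, alpha x y = alpha (star y) (star x).
Variable one : Dcl mul -> S.
Hypothesis one_in : forall D, one D \in val D.
Hypothesis one_idem : forall D, mul (one D) (one D) = one D.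
Hypothesis one_star : forall D, star (one D) = one D.
Variable beta : Dcl mul -> S -> S -> R.
Hypothesis beta_unit : forall D x y, x \in LD one D -> y \in LDs star one D ->
      exists b, beta D x y * b = 1.
Hypothesis beta_tw : forall D x y z,
      x \in LD one D -> y \in LD one D -> y \in LDs star one D ->
      mul x y \in LD one D -> z \in LDs star one D -> mul y z \in LDs star one D ->
      beta D x y * beta D (mul x y) z = beta D x (mul y z) * beta D y z.
Hypothesis alpha_beta : forall D x y z,
      mul x y \in LD one D -> y \in LD one D -> z \in LDs star one D ->
      alpha x y * beta D (mul x y) z = alpha x (mul y z) * beta D y z.
Hypothesis beta_star : forall D x y, x \in LD one D -> y \in LDs star one D ->
      beta D x y = beta D (star y) (star x).
Variables (Lam : Dcl mul -> finType) (le : forall D, rel (Lam D))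
  (M : forall D, Lam D -> finType)
  (C : forall D (l : Lam D), M D l -> M D l -> {ffun Gt star one D -> R}).
Hypothesis cellD : forall D,
      is_cellular (@gmul R S mul star one D (beta D)) (@gstar R S mul star one D)
                  (le D) (C D).
Variable u : {set S} -> S.
Hypothesis u_in : forall (D : Dcl mul) (L : Lcl D), u (val L) \in val L.
Hypothesis u_R : forall (D : Dcl mul) (L : Lcl D), Rrel mul (u (val L)) (one D).
Local Set Implicit Arguments.

Definition Phi (D : Dcl mul) (L K : Lcl D) (f : {ffun Gt star one D -> R}) : {ffun S -> R} :=
  \sum_(g : Gt star one D)
     fsc (f g * beta D (star (u (val L))) (val g) * beta D (mul (star (u (val L))) (val g)) (u (val K)))
         (delta R (mul (mul (star (u (val L))) (val g)) (u (val K)))).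

Lemma bigC_Phi D l (L K : Lcl D) s t :
  @bigC R S mul star one beta u Lam M C D l L s K t = Phi L K (C D l s t).
Proof. by []. Qed.

Definition kk D (L K : Lcl D) (g : Gt star one D) :=
  beta D (star (u (val L))) (val g) * beta D (mul (star (u (val L))) (val g)) (u (val K)).

Lemma PhiE D (L K : Lcl D) f z :
  Phi L K f z = \sum_g f g * kk L K g * (z == pt star u L (val g) K)%:R.
Proof. by rewrite sum_fsc_delta; apply: eq_bigr => g _; rewrite /kk !mulrA. Qed.

Lemma PhiD D (L K : Lcl D) f1 f2 : Phi L K (f1 + f2) = Phi L K f1 + Phi L K f2.
Proof.
apply/ffunP => z; rewrite ffunE !PhiE -big_split; apply: eq_bigr => g _.
by rewrite ffunE /= !mulrDl.
Qed.
Lemma PhiZ D (L K : Lcl D) c f : Phi L K (fsc c f) = fsc c (Phi L K f).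
Proof.
apply/ffunP => z; rewrite fscE !PhiE mulr_sumr; apply: eq_bigr => g _.
by rewrite fscE; ring.
Qed.
Lemma Phi0 D (L K : Lcl D) : Phi L K 0 = 0.
Proof.
apply/ffunP => z; rewrite PhiE ffunE big1 // => g _; rewrite ffunE; ring.
Qed.
Lemma PhiN D (L K : Lcl D) f : Phi L K (- f) = - Phi L K f.
Proof.
apply/ffunP => z; rewrite ffunE !PhiE -sumrN; apply: eq_bigr => g _.
by rewrite ffunE; ring.
Qed.
Lemma PhiB D (L K : Lcl D) f1 f2 : Phi L K (f1 - f2) = Phi L K f1 - Phi L K f2.
Proof. by rewrite PhiD PhiN. Qed.
Lemma Phi_sum D (L K : Lcl D) (J : Type) (r : seq J) (P : pred J) F :
  Phi L K (\sum_(j <- r | P j) F j) = \sum_(j <- r | P j) Phi L K (F j).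
Proof. by apply: (big_morph _ (PhiD L K) (Phi0 L K)). Qed.

Lemma LDi D x : x \in LD one D <-> inL one D x.
Proof. exact: (LD_inL mulA one_idem). Qed.
Lemma LDsi D x : x \in LDs star one D <-> inR one D x.
Proof. exact: (LDs_inR mulA starK starM one_idem one_star). Qed.
Lemma GDi D x : x \in GD star one D <-> inG one D x.
Proof. exact: (GD_inG mulA starK starM one_idem one_star). Qed.

Lemma cocycle D v' g w v h w' :
  inL one D v' -> inG one D g -> inR one D w -> inL one D v -> inG one D h ->
  inR one D w' -> inG one D (mul w v) ->
  beta D v' g * beta D (mul v' g) w * (beta D v h * beta D (mul v h) w') *
    alpha (mul (mul v' g) w) (mul (mul v h) w')
  = alpha w v * beta D g (mul w v) * beta D (mul g (mul w v)) h *
    (beta D v' (mul (mul g (mul w v)) h) * beta D (mul v' (mul (mul g (mul w v)) h)) w').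
Proof.
move=> hv' hg hw hv hh hw' hp.
have iLG x y : inL one D x -> inG one D y -> inL one D (mul x y) by apply: inL_mulG.
have iGR x y : inG one D x -> inR one D y -> inR one D (mul x y) by apply: (inR_mulG mulA starK starM one_star).
have iGG x y : inG one D x -> inG one D y -> inG one D (mul x y) by apply: (inG_mul mulA starK starM one_star).
have iRs x : inR one D x -> inL one D (star x) by apply: (inR_star starM one_star).
have iLs x : inL one D x -> inR one D (star x) by apply: (inL_star starM one_star).
have iGs x : inG one D x -> inG one D (star x) by apply: (inG_star starM one_star).
have hvg := iLG _ _ hv' hg.
have hgp := iGG _ _ hg hp.
have hgph := iGG _ _ hgp hh.
set x := mul (mul v' g) w.
have P0 : mul x v = mul v' (mul g (mul w v)) by rewrite /x !mulA.
have P2 : mul x (mul v h) = mul v' (mul (mul g (mul w v)) h) by rewrite /x !mulA.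
have E1 : alpha x (mul v h) * beta D (mul x (mul v h)) w' =
          alpha x (mul (mul v h) w') * beta D (mul v h) w'.
  apply: alpha_beta; first by apply/LDi; rewrite P2; apply: iLG.
  + by apply/LDi; apply: iLG.
  + by apply/LDsi.
have E2 : alpha x v * beta D (mul x v) h = alpha x (mul v h) * beta D v h.
  apply: alpha_beta; first by apply/LDi; rewrite P0; apply: iLG.
  + by apply/LDi.
  + by apply/LDsi; case: hh.
have E3 : alpha (star v) (star w) * beta D (mul (star v) (star w)) (star (mul v' g)) =
          alpha (star v) (mul (star w) (star (mul v' g))) * beta D (star w) (star (mul v' g)).
  apply: alpha_beta.
  + by apply/LDi; rewrite -starM; case: (iGs _ hp).
  + by apply/LDi; apply: iRs.
  + by apply/LDsi; apply: iLs.
have S1 : alpha x v = alpha (star v) (mul (star w) (star (mul v' g))).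
  by rewrite alpha_star /x [star (mul (mul v' g) w)]starM.
have S2 : alpha w v = alpha (star v) (star w) by apply: alpha_star.
have S3 : beta D (mul v' g) (mul w v) = beta D (mul (star v) (star w)) (star (mul v' g)).
  by rewrite beta_star ?starM //; [apply/LDi | apply/LDsi; case: hp].
have S4 : beta D (mul v' g) w = beta D (star w) (star (mul v' g)).
  by rewrite beta_star //; [apply/LDi | apply/LDsi].
have T1 : beta D v' g * beta D (mul v' g) (mul w v) =
          beta D v' (mul g (mul w v)) * beta D g (mul w v).
  apply: beta_tw; try (by apply/LDi); try (by apply/LDsi).
  + by apply/LDi; case: hg.
  + by apply/LDsi; case: hg.
  + by apply/LDsi; case: hp.
  + by apply/LDsi; case: hgp.
have T2 : beta D v' (mul g (mul w v)) * beta D (mul v' (mul g (mul w v))) h =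
          beta D v' (mul (mul g (mul w v)) h) * beta D (mul g (mul w v)) h.
  apply: beta_tw.
  + by apply/LDi.
  + by apply/LDi; case: hgp.
  + by apply/LDsi; case: hgp.
  + by apply/LDi; apply: iLG.
  + by apply/LDsi; case: hh.
  + by apply/LDsi; case: hgph.
transitivity (beta D v' g * beta D (mul v' g) w * beta D v h *
   (alpha x (mul v h) * beta D (mul x (mul v h)) w')); first by rewrite E1; ring.
transitivity (beta D v' g * beta D (mul v' g) w * (alpha x v * beta D (mul x v) h) *
   beta D (mul x (mul v h)) w'); first by rewrite E2; ring.
transitivity (beta D v' g * (beta D (star w) (star (mul v' g)) * alpha (star v) (mul (star w) (star (mul v' g)))) *
   beta D (mul x v) h * beta D (mul x (mul v h)) w'); first by rewrite S1 S4; ring.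
transitivity (beta D v' g * (alpha (star v) (star w) * beta D (mul (star v) (star w)) (star (mul v' g))) *
   beta D (mul x v) h * beta D (mul x (mul v h)) w'); first by rewrite E3; ring.
transitivity (alpha w v * (beta D v' g * beta D (mul v' g) (mul w v)) *
   beta D (mul x v) h * beta D (mul x (mul v h)) w'); first by rewrite S2 S3; ring.
rewrite T1 P0 P2.
transitivity (alpha w v * beta D g (mul w v) *
  (beta D v' (mul g (mul w v)) * beta D (mul v' (mul g (mul w v))) h) *
  beta D (mul v' (mul (mul g (mul w v)) h)) w'); first by ring.
by rewrite T2; ring.
Qed.

Lemma vL' D (L : Lcl D) : inL one D (star (u (val L))).
Proof. exact: (vL mulA starM one_idem one_star u_R). Qed.
Lemma uR' D (L : Lcl D) : inR one D (u (val L)).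
Proof. exact: (uR mulA one_idem u_R). Qed.
Lemma pt_inj' D (L1 K1 L2 K2 : Lcl D) g1 g2 : inG one D g1 -> inG one D g2 ->
  pt star u L1 g1 K1 = pt star u L2 g2 K2 -> [/\ L1 = L2, K1 = K2 & g1 = g2].
Proof. exact: (pt_inj mulA starK starM one_idem one_star u_in u_R). Qed.
Lemma pt_inD' D (L K : Lcl D) g : inG one D g -> pt star u L g K \in val D.
Proof. exact: (pt_inD mulA starM one_idem one_star u_in u_R). Qed.
Lemma junk' D (L' L K K' : Lcl D) g h :
  inG one D g -> inG one D h -> ~ inG one D (mul (u (val L)) (star (u (val K)))) ->
  exists D1 : Dcl mul, [/\ mul (mul (star (u (val L'))) g) (mul (mul (u (val L)) (star (u (val K)))) (mul h (u (val K')))) \in val D1, Dlt mul (val D1) (val D) & D1 != D].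
Proof. exact: (junk_below mulA starM one_idem one_star u_R one_in). Qed.
Lemma decomp' (D : Dcl mul) x : x \in val D -> exists (L K : Lcl D) g, inG one D g /\ x = pt star u L g K.
Proof. exact: (decomp mulA starK starM one_idem one_star u_in u_R one_in). Qed.

Lemma gm_proof D (a b : Gt star one D) : mul (val a) (val b) \in GD star one D.
Proof.
apply/GDi; apply: (inG_mul mulA starK starM one_star); apply/GDi; exact: valP.
Qed.
Definition gm D (a b : Gt star one D) : Gt star one D :=
  exist (fun x : S => x \in GD star one D) _ (gm_proof a b).

Lemma valG D (a : Gt star one D) : inG one D (val a).
Proof. by apply/GDi; exact: valP. Qed.

Lemma collapse D (w : Gt star one D) (F : Gt star one D -> R) :
  \sum_x (val w == val x)%:R * F x = F w.
Proof.
rewrite (bigD1 w) //= [X in _ + X]big1 ?eqxx ?mul1r ?addr0 // => x ne.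
by rewrite eq_sym (inj_eq val_inj) (negbTE ne) mul0r.
Qed.

Lemma gmulE D (f1 f2 : {ffun Gt star one D -> R}) z :
  gmul (beta D) f1 f2 z =
  \sum_x \sum_y (mul (val x) (val y) == val z)%:R * (beta D (val x) (val y) * f1 x * f2 y).
Proof.
rewrite ffunE; apply: eq_bigr => x _; rewrite big_mkcond /=; apply: eq_bigr => y _.
by case: eqP; rewrite ?mul1r ?mul0r.
Qed.

Lemma collapse2 D (c : Gt star one D -> Gt star one D -> R) (G : Gt star one D -> R)
   (w : Gt star one D -> Gt star one D -> Gt star one D) :
  \sum_z (\sum_g \sum_h (val (w g h) == val z)%:R * c g h) * G z
  = \sum_g \sum_h c g h * G (w g h).
Proof.
under eq_bigr => z _ do rewrite mulr_suml.
rewrite exchange_big; apply: eq_bigr => g _.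
under eq_bigr => z _ do rewrite mulr_suml.
rewrite exchange_big; apply: eq_bigr => h _.
under eq_bigr => z _ do rewrite -mulrA.
by rewrite collapse.
Qed.

Section Prod.
Variables (D : Dcl mul) (L' L K K' : Lcl D).
Local Notation p := (mul (u (val L)) (star (u (val K)))).
Local Notation P := (sandwich star one alpha u L K).

Lemma gmul_P (p0 : Gt star one D) (ep : val p0 = p) f x :
  gmul (beta D) f P x = \sum_g (val (gm g p0) == val x)%:R * (beta D (val g) p * f g * alpha (u (val L)) (star (u (val K)))).
Proof.
rewrite gmulE; apply: eq_bigr => g _.
under eq_bigr => q _ do rewrite ffunE.
rewrite (bigD1 p0) //= [X in _ + X]big1 ?addr0 => [|q ne]; last first.
  by rewrite -ep (inj_eq val_inj) (negbTE ne) !mulr0.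
by rewrite ep eqxx.
Qed.


Lemma gmul_PP (p0 : Gt star one D) (ep : val p0 = p) f f' z :
  gmul (beta D) (gmul (beta D) f P) f' z =
  \sum_g \sum_h (val (gm (gm g p0) h) == val z)%:R *
     (alpha (u (val L)) (star (u (val K))) * beta D (val g) p *
      beta D (val (gm g p0)) (val h) * f g * f' h).
Proof.
rewrite gmulE.
transitivity (\sum_(x : Gt star one D) \sum_(y : Gt star one D) \sum_(g : Gt star one D) (val (gm g p0) == val x)%:R *
   ((mul (val x) (val y) == val z)%:R * (beta D (val x) (val y) *
     (beta D (val g) p * f g * alpha (u (val L)) (star (u (val K)))) * f' y))).
  apply: eq_bigr => x _; apply: eq_bigr => y _; rewrite (gmul_P ep).
  rewrite mulr_sumr mulr_suml mulr_sumr; apply: eq_bigr => g _; ring.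
under eq_bigr => x _ do rewrite exchange_big.
rewrite exchange_big; apply: eq_bigr => g _; rewrite exchange_big; apply: eq_bigr => h _.
rewrite collapse /=; ring.
Qed.

Lemma prod_G (p0 : Gt star one D) (ep : val p0 = p) f f' :
  tmul mul alpha (Phi L' L f) (Phi K K' f') = Phi L' K' (gmul (beta D) (gmul (beta D) f P) f').
Proof.
apply/ffunP => s.
rewrite PhiE; under [RHS]eq_bigr => z _ do rewrite (gmul_PP ep) -mulrA.
rewrite collapse2 /Phi tmul_sums sum_ffunE; apply: eq_bigr => g _.
rewrite sum_ffunE; apply: eq_bigr => h _.
rewrite fscE deltaE /kk /pt /= ep.
have hp : inG one D p by rewrite -ep; apply: valG.
have Ecc := cocycle (vL' L') (valG g) (uR' L) (vL' K) (valG h) (uR' K') hp.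
have -> : mul (mul (mul (star (u (val L'))) (val g)) (u (val L)))
              (mul (mul (star (u (val K))) (val h)) (u (val K'))) =
          mul (mul (star (u (val L'))) (mul (mul (val g) p) (val h))) (u (val K')).
  by rewrite !mulA.
set i1 := (_ == _)%:R.
transitivity (beta D (star (u (val L'))) (val g) *
       beta D (mul (star (u (val L'))) (val g)) (u (val L)) *
       (beta D (star (u (val K))) (val h) * beta D (mul (star (u (val K))) (val h)) (u (val K'))) *
       alpha (mul (mul (star (u (val L'))) (val g)) (u (val L)))
         (mul (mul (star (u (val K))) (val h)) (u (val K'))) * (f g * f' h * i1)); first by ring.
rewrite Ecc; ring.
Qed.
End Prod.

Definition LSB (l0 : BLam Lam) (v : {ffun S -> R}) :=
  lower_span (strict (Ble le)) (BC beta u C) l0 v.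

Lemma kk_unit D (L K : Lcl D) g : exists b, kk L K g * b = 1.
Proof.
have hg := valG g.
have [b1 h1] : exists b, beta D (star (u (val L))) (val g) * b = 1.
  by apply: beta_unit; [apply/LDi; apply: vL' | apply/LDsi; case: hg].
have [b2 h2] : exists b, beta D (mul (star (u (val L))) (val g)) (u (val K)) * b = 1.
  apply: beta_unit; [apply/LDi; apply: inL_mulG => //; apply: vL' | apply/LDsi; apply: uR'].
by exists (b1 * b2); rewrite /kk mulrACA h1 h2 mulr1.
Qed.

Lemma Phi_delta D (L K : Lcl D) (g0 : Gt star one D) :
  Phi L K [ffun h => (h == g0)%:R] = fsc (kk L K g0) (delta R (pt star u L (val g0) K)).
Proof.
apply/ffunP => z; rewrite PhiE fscE deltaE (bigD1 g0) //= [X in _ + X]big1 ?addr0.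
  by rewrite ffunE eqxx mul1r.
by move=> h ne; rewrite ffunE (negbTE ne) !mul0r.
Qed.

Lemma span_lower (D1 : Dcl mul) (l0 : BLam Lam)
  (hl : forall mu : Lam D1, strict (Ble le) (existT _ D1 mu) l0) q :
  q \in val D1 -> LSB l0 (delta R q).
Proof.
move=> /decomp'[L [K [g [hg ->]]]].
have hgG : g \in GD star one D1 by apply/GDi.
pose g0 : Gt star one D1 := exist (fun x : S => x \in GD star one D1) g hgG.
case: (cellD D1) => _ [Finv _ hF] _ _ _.
set F := (fun c : {ffun {l : Lam D1 & (M D1 l * M D1 l)%type} -> R} =>
      \sum_i fsc (c i) (C D1 (tag i) (tagged i).1 (tagged i).2)) in hF.
have E : Phi L K (F (Finv [ffun h => (h == g0)%:R])) = fsc (kk L K g0) (delta R (pt star u L g K)).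
  by rewrite hF Phi_delta.
have : LSB l0 (fsc (kk L K g0) (delta R (pt star u L g K))).
  rewrite -E /F Phi_sum; apply: ls_sum => i _; rewrite PhiZ.
  exact: (@ls_single _ _ _ _ (BM M) (BC beta u C) l0 (existT _ D1 (tag i))
            (L, (tagged i).1) (K, (tagged i).2) _ (hl _)).
move=> h; have [b hb] := kk_unit L K g0.
have -> : delta R (pt star u L g K) = fsc b (fsc (kk L K g0) (delta R (pt star u L g K))).
  by apply/ffunP => z; rewrite !fscE mulrA [b * _]mulrC hb mul1r.
exact: (lsZ b h).
Qed.

Lemma strict_below D (l : Lam D) (D1 : Dcl mul) (mu : Lam D1) :
  Dlt mul (val D1) (val D) -> D1 != D -> strict (Ble le) (existT _ D1 mu) (existT _ D l).
Proof.
move=> hlt hne; rewrite /strict /Ble /= hlt /=.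
apply/negP => /eqP /(congr1 tag) /= E; by rewrite E eqxx in hne.
Qed.

Lemma gmul0r D (f : {ffun Gt star one D -> R}) : gmul (beta D) 0 f = 0.
Proof.
apply/ffunP => z; rewrite gmulE ffunE big1 // => x _; rewrite big1 // => y _.
by rewrite ffunE mulr0 mul0r mulr0.
Qed.
Lemma gmulr0 D (f : {ffun Gt star one D -> R}) : gmul (beta D) f 0 = 0.
Proof.
apply/ffunP => z; rewrite gmulE ffunE big1 // => x _; rewrite big1 // => y _.
by rewrite ffunE mulr0 mulr0.
Qed.

Lemma prod_lower D (l : Lam D) (L' L K K' : Lcl D) f f' :
  LSB (existT _ D l) (tmul mul alpha (Phi L' L f) (Phi K K' f') -
     Phi L' K' (gmul (beta D) (gmul (beta D) f (sandwich star one alpha u L K)) f')).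
Proof.
case: (boolP (mul (u (val L)) (star (u (val K))) \in GD star one D)) => hp.
  pose p0 : Gt star one D := exist (fun x : S => x \in GD star one D) _ hp.
  by rewrite (@prod_G D L' L K K' p0 erefl) subrr; apply: ls0.
have -> : sandwich star one alpha u L K = 0.
  apply/ffunP => g; rewrite !ffunE; case: eqP => // E.
  by move: hp; rewrite -E (valP g).
rewrite gmulr0 gmul0r Phi0 subr0 /Phi tmul_sums.
apply: ls_sum => g _; apply: ls_sum => h _; apply: lsZ.
have hp' : ~ inG one D (mul (u (val L)) (star (u (val K)))) by move=> /GDi; apply/negP.
have [D1 [hq hlt hne]] := junk' L' K' (valG g) (valG h) hp'.
apply: (span_lower (D1 := D1)); first by move=> mu; apply: strict_below.
by move: hq; rewrite !mulA.
Qed.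

Lemma Dlt_irr (D : Dcl mul) : ~~ Dlt mul (val D) (val D).
Proof.
apply/negP => /existsP[x /andP[hx /existsP[y /andP[hy /andP[_ /negP hn]]]]].
by apply: hn; case/andP: (Dcl_Jrel mulA hy hx).
Qed.

Lemma strict_same D (l mu : Lam D) :
  strict (Ble le) (existT _ D mu) (existT _ D l) = strict (le D) mu l.
Proof.
rewrite /strict /Ble /= (negbTE (Dlt_irr D)) /= eqxx /= tagged_asE.
congr (_ && _); apply/idP/idP => /negP h; apply/negP => E; apply: h.
- by rewrite (eqP E).
- by move: E; rewrite eq_Tagged /=.
Qed.

Lemma Phi_pt D (L'' K'' L' K' : Lcl D) f g :
  Phi L'' K'' f (pt star u L' (val g) K') =
  if (L'' == L') && (K'' == K') then f g * kk L' K' g else 0.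
Proof.
rewrite PhiE; case: ifP => [/andP[/eqP -> /eqP ->]|hne].
  rewrite (bigD1 g) //= [X in _ + X]big1 ?eqxx ?mulr1 ?addr0 // => h ne.
  case: eqP; rewrite ?mulr0 // => /esym /(pt_inj' (valG h) (valG g)) [_ _ /val_inj E].
  by rewrite E eqxx in ne.
apply: big1 => h _; case: eqP; rewrite ?mulr0 // => /(pt_inj' (valG g) (valG h)) [E1 E2 _].
by rewrite E1 E2 !eqxx in hne.
Qed.

Lemma transfer_l D (l : Lam D) (L' K' : Lcl D) Y :
  lower_span (strict (le D)) (C D) l Y -> LSB (existT _ D l) (Phi L' K' Y).
Proof.
move=> [c ->]; rewrite Phi_sum; apply: ls_sum => mu hmu.
rewrite Phi_sum; apply: ls_sum => x _; rewrite Phi_sum; apply: ls_sum => y _.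
rewrite PhiZ.
have hm' : strict (Ble le) (existT _ D mu) (existT _ D l) by rewrite strict_same.
exact: (@ls_single _ _ _ _ (BM M) (BC beta u C) (existT _ D l) (existT _ D mu)
            (L', x) (K', y) _ hm').
Qed.

Definition QQ D (l : Lam D) (L' K' : Lcl D) (v : {ffun S -> R}) :=
  exists T, lower_span (strict (le D)) (C D) l T /\
    forall g, v (pt star u L' (val g) K') = T g * kk L' K' g.

Lemma QQ_term D (l : Lam D) (L' K' : Lcl D) (m : BLam Lam) (x y : BM M m) r :
  strict (Ble le) m (existT _ D l) -> QQ l L' K' (fsc r (BC beta u C x y)).
Proof.
case: m x y => D1 mu [L1 x0] [K1 y0] hm.
case: (eqVneq D1 D) => [E|ne].
  subst D1; rewrite strict_same in hm.
  case: (boolP ((L1 == L') && (K1 == K'))) => hLK.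
  - exists (fsc r (C D mu x0 y0)); split; first exact: ls_single.
    move=> g; rewrite !fscE.
    have -> : BC beta u C (L1, x0) (K1, y0) = Phi L1 K1 (C D mu x0 y0) by [].
    rewrite Phi_pt hLK.
    by rewrite mulrA.
  - exists 0; split; first exact: ls0.
    move=> g; rewrite !fscE.
    have -> : BC beta u C (L1, x0) (K1, y0) = Phi L1 K1 (C D mu x0 y0) by [].
    rewrite Phi_pt (negbTE hLK).
    by rewrite ffunE !mul0r mulr0.
exists 0; split; first exact: ls0.
move=> g; rewrite fscE.
have -> : BC beta u C (L1, x0) (K1, y0) = Phi L1 K1 (C D1 mu x0 y0) by [].
rewrite PhiE big1 ?mulr0 ?ffunE ?mul0r // => h _.
case: eqP; rewrite ?mulr0 // => E.
have h1 := pt_inD' L' K' (valG g); have h2 := pt_inD' L1 K1 (valG h).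
have h3 : pt star u L1 (val h) K1 \in val D by rewrite -E.
by exfalso; move/eqP: ne; apply; exact: (Dcl_eq mulA h2 h3).
Qed.

Lemma transfer_r D (l : Lam D) (L' K' : Lcl D) Y :
  LSB (existT _ D l) (Phi L' K' Y) -> lower_span (strict (le D)) (C D) l Y.
Proof.
move=> [c E].
have : QQ l L' K' (Phi L' K' Y).
  rewrite E; apply: big_ind.
  - exists 0; split; first exact: ls0.
    by move=> g; rewrite !ffunE mul0r.
  - move=> v1 v2 [T1 [h1 e1]] [T2 [h2 e2]]; exists (T1 + T2); split; first exact: lsD.
    by move=> g; rewrite !ffunE e1 e2 mulrDl.
  - move=> m hm; apply: big_ind.
    + exists 0; split; first exact: ls0.
      by move=> g; rewrite !ffunE mul0r.
    + move=> v1 v2 [T1 [h1 e1]] [T2 [h2 e2]]; exists (T1 + T2); split; first exact: lsD.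
      by move=> g; rewrite !ffunE e1 e2 mulrDl.
    + move=> x _; apply: big_ind.
      * exists 0; split; first exact: ls0.
        by move=> g; rewrite !ffunE mul0r.
      * move=> v1 v2 [T1 [h1 e1]] [T2 [h2 e2]]; exists (T1 + T2); split; first exact: lsD.
        by move=> g; rewrite !ffunE e1 e2 mulrDl.
      * by move=> y _; apply: QQ_term.
move=> [T [hT eT]].
have -> : Y = T; last exact: hT.
apply/ffunP => g; have := eT g; rewrite Phi_pt !eqxx /= => e.
have [b hb] := kk_unit L' K' g.
by rewrite -[Y g]mulr1 -hb mulrA e -mulrA hb mulr1.
Qed.

Lemma main D (l : Lam D) (L K : Lcl D) (s t : M D l) :
  phi (tmul mul alpha) (strict (Ble le)) (BC beta u C)
        (l := existT _ D l) (L, s) (K, t)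
  = phi_a (@gmul R S mul star one D (beta D)) (strict (le D)) (C D)
        (sandwich star one alpha u L K) s t.
Proof.
rewrite /phi /phi_a; congr (epsilon _); apply: functional_extensionality => r.
apply: propositional_extensionality; split.
- move=> h s' t'; apply: (@transfer_r D l L K); rewrite PhiB PhiZ.
  have h1 := h (L, s') (K, t').
  have h2 := @prod_lower D l L L K K (C D l s' s) (C D l t t').
  exact: (ls_eqB _ h2).1 h1.
- move=> h [L' s'] [K' t'].
  have h1 := @transfer_l D l L' K' _ (h s' t'); rewrite PhiB PhiZ in h1.
  have h2 := @prod_lower D l L' L K K' (C D l s' s) (C D l t t').
  exact: (ls_eqB _ h2).2 h1.
Qed.
End Main.

Unset Implicit Arguments.
Local Open Scope ring_scope.

Theorem lemma13
  (* S : a finite semigroup with anti-involution star *)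
  (S : finType) (mul : S -> S -> S) (star : S -> S)
  (mulA : forall x y z, mul x (mul y z) = mul (mul x y) z)
  (starK : forall x, star (star x) = x)
  (starM : forall x y, star (mul x y) = mul (star y) (star x))
  (* R : a commutative ring with 1 *)
  (R : comPzRingType)
  (* alpha : a twisting from S into R with alpha(x,y) = alpha(y^*,x^* ) *)
  (alpha : S -> S -> R)
  (alpha_tw : forall x y z,
      alpha x y * alpha (mul x y) z = alpha x (mul y z) * alpha y z)
  (alpha_star : forall x y, alpha x y = alpha (star y) (star x))
  (* 1_D : a *-fixed idempotent in each D-class D *)
  (one : Dcl mul -> S)
  (one_in : forall D, one D \in val D)
  (one_idem : forall D, mul (one D) (one D) = one D)
  (one_star : forall D, star (one D) = one D)
  (* beta_D : L_D x L_D^* -> G(R) *)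
  (beta : Dcl mul -> S -> S -> R)
  (beta_unit : forall D x y, x \in LD one D -> y \in LDs star one D ->
      exists b, beta D x y * b = 1)
  (beta_tw : forall D x y z,
      x \in LD one D -> y \in LD one D -> y \in LDs star one D ->
      mul x y \in LD one D -> z \in LDs star one D -> mul y z \in LDs star one D ->
      beta D x y * beta D (mul x y) z = beta D x (mul y z) * beta D y z)
  (alpha_beta : forall D x y z,
      mul x y \in LD one D -> y \in LD one D -> z \in LDs star one D ->
      alpha x y * beta D (mul x y) z = alpha x (mul y z) * beta D y z)
  (beta_star : forall D x y, x \in LD one D -> y \in LDs star one D ->
      beta D x y = beta D (star y) (star x))
  (* a cell datum (Lam_D, M_D, C, star) for each R^{beta_D}[G_D] *)
  (Lam : Dcl mul -> finType) (le : forall D, rel (Lam D))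
  (M : forall D, Lam D -> finType)
  (C : forall D (l : Lam D), M D l -> M D l -> {ffun Gt star one D -> R})
  (cellD : forall D,
      is_cellular (@gmul R S mul star one D (beta D)) (@gstar R S mul star one D)
                  (le D) (C D))
  (* the chosen elements u_L \in L with u_L R 1_D *)
  (u : {set S} -> S)
  (u_in : forall (D : Dcl mul) (L : Lcl D), u (val L) \in val L)
  (u_R : forall (D : Dcl mul) (L : Lcl D), Rrel mul (u (val L)) (one D)) :
  forall (D : Dcl mul) (l : Lam D) (L K : Lcl D) (s t : M D l),
    phi (tmul mul alpha) (strict (Ble le)) (BC beta u C)
        (l := existT _ D l) (L, s) (K, t)
    = phi_a (@gmul R S mul star one D (beta D)) (strict (le D)) (C D)
        (sandwich star one alpha u L K) s t.
Proof.
exact: (main mulA starK starM alpha_star one_in one_idem one_star beta_unit beta_tw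
          alpha_beta beta_star cellD u_in u_R).
Qed.
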